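(* Consider two bosonic modes with quadratures $(\hat q_1,\hat p_1,\hat q_2,\hat p_2)$, subsystem $A$ = mode 1, $B$ = mode 2, and the Hamiltonian $\hat H=\frac12(\hat p_1\hat q_2+\hat q_2\hat p_1)$, whose symplectic evolution is $$M(t)=\begin{pmatrix}1&0&t&0\\0&1&0&0\\0&0&1&0\\0&-t&0&1\end{pmatrix}.$$ Then for every $t\ge0$, $$\inf_{\sigma\ \mathrm{Gaussian}}\Big(I(A;B)(\sigma)+I(A;B)(\mathcal U_{M(t)}(\sigma))\Big)\ \le\ 2\ln\frac e2,$$ the infimum being over all Gaussian states $\sigma$ of $AB$.
   Context: Quadratures satisfy $[\hat\xi^a,\hat\xi^b]=i\Omega_4^{ab}$ with $\Omega_4=\bigoplus_{i=1}^2\begin{pmatrix}0&1\\-1&0\end{pmatrix}$. Gaussian states are those fully characterized by displacement and covariance matrix $G^{ab}=\mathrm{Tr}[\hat\xi^a\sigma\hat\xi^b+\hat\xi^b\sigma\hat\xi^a]-2z^az^b$. $\mathcal U_M(\sigma)=U_M\sigma U_M^\dagger$ with $U_M^\dagger\hat\xi^aU_M=\sum_bM^a{}_b\hat\xi^b$, so the covariance matrix transforms as $G\mapsto MGM^\intercal$. $I(A;B)=S(A)+S(B)-S(AB)$ with von Neumann entropies. *)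

(* Defs.v *)
From HB Require Import structures.
From mathcomp Require Import all_boot all_order all_algebra.
From mathcomp Require Import all_classical all_reals all_analysis.
From mathcomp Require Import complex.

Set Implicit Arguments.
Unset Strict Implicit.
Unset Printing Implicit Defensive.

Import Order.TTheory GRing.Theory Num.Theory.
Local Open Scope ring_scope.
Local Open Scope classical_set_scope.

Section Gaussian.
Variable R : realType.

Definition Omega2 : 'M[R]_2 :=
  \matrix_(i < 2, j < 2)
    (if (i == 0%N :> nat) && (j == 1%N :> nat) then 1
     else if (i == 1%N :> nat) && (j == 0%N :> nat) then -1 else 0).

(* Omega_4 = Omega2 (+) Omega2, quadrature order (q1,p1,q2,p2) *)
Definition Omega4 : 'M[R]_4 := block_mx Omega2 0 0 Omega2.

Definition Mt (t : R) : 'M[R]_4 :=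
  \matrix_(i < 4, j < 4)
    (if i == j then 1
     else if (i == 0%N :> nat) && (j == 2%N :> nat) then t
     else if (i == 3%N :> nat) && (j == 1%N :> nat) then - t else 0).

Definition cplx_mx m n (A : 'M[R]_(m, n)) : 'M[R[i]]_(m, n) :=
  map_mx (fun x => x%:C%C) A.

Definition psd_cplx n (H : 'M[R[i]]_n) : Prop :=
  forall v : 'cV[R[i]]_n, 0 <= ((map_mx conjc v)^T *m H *m v) 0 0.

(* Covariance matrices of (two-mode) Gaussian states:
   G real symmetric and G + i Omega_4 >= 0 (uncertainty principle). *)
Definition gaussian_cov (G : 'M[R]_4) : Prop :=
  G^T = G /\ psd_cplx (cplx_mx G + (Complex 0 1) *: cplx_mx Omega4).

(* Entropy contribution of a symplectic eigenvalue nu (vacuum has G = I, nu = 1):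
   g(nu) = (nu+1)/2 ln((nu+1)/2) - (nu-1)/2 ln((nu-1)/2). *)
Definition gfun (nu : R) : R :=
  (nu + 1) / 2 * ln ((nu + 1) / 2) - (nu - 1) / 2 * ln ((nu - 1) / 2).

(* nu is the symplectic spectrum of G w.r.t. the symplectic form Om:
   the eigenvalues of Om G are exactly +/- i nu_k, i.e.
   char_poly (Om G) = prod_k (X^2 + nu_k^2), with nu_k >= 0. *)
Definition symp_spec n (Om G : 'M[R]_n) (nu : seq R) : Prop :=
  all (fun x => 0 <= x) nu /\
  char_poly (Om *m G) = \prod_(x <- nu) ('X^2 + (x ^+ 2)%:P).

(* von Neumann entropy of a Gaussian state with covariance matrix G:
   S = sum_k g(nu_k) over the symplectic eigenvalues. *)
Definition gauss_entropy n (Om G : 'M[R]_n) : R :=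
  xget 0 [set s | exists nu, symp_spec Om G nu /\ s = \sum_(x <- nu) gfun x].

Definition covA (G : 'M[R]_4) : 'M[R]_2 := @ulsubmx R 2 2 2 2 G.
Definition covB (G : 'M[R]_4) : 'M[R]_2 := @drsubmx R 2 2 2 2 G.

Definition mutual_info (G : 'M[R]_4) : R :=
  gauss_entropy Omega2 (covA G) + gauss_entropy Omega2 (covB G)
  - gauss_entropy Omega4 G.

End Gaussian.

(* Main.v *)
Require Import Defs.
From HB Require Import structures.
From mathcomp Require Import all_boot all_order all_algebra.
From mathcomp Require Import all_classical all_reals all_analysis.
From mathcomp Require Import complex.
From mathcomp Require Import ring lra.
Import Order.TTheory GRing.Theory Num.Theory.
Local Open Scope ring_scope.
Local Open Scope classical_set_scope.
Set Implicit Arguments.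
Unset Strict Implicit.

Section S.
Variable R : realType.

Definition om4 (i j : nat) : R := match i, j with
  | 0, 1 => 1 | 1, 0 => -1 | 2, 3 => 1 | 3, 2 => -1 | _, _ => 0 end.

Lemma Omega4E : Omega4 R = \matrix_(i < 4, j < 4) om4 i j.
Proof.
apply/matrixP => i j; rewrite [RHS]mxE /Omega4.
move: i j; rewrite -[4%N]/(2+2)%N => i j.
case: (splitP i) => i' Hi; case: (splitP j) => j' Hj.
- have -> : i = lshift 2 i' by apply/val_inj.
  have -> : j = lshift 2 j' by apply/val_inj.
  rewrite block_mxEul mxE /=; clear Hi Hj.
  by case: i' => -[|[|?]] ? //; case: j' => -[|[|?]] ?.
- have -> : i = lshift 2 i' by apply/val_inj.
  have -> : j = rshift 2 j' by apply/val_inj.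
  rewrite block_mxEur mxE /=; clear Hi Hj.
  by case: i' => -[|[|?]] ? //; case: j' => -[|[|?]] ?.
- have -> : i = rshift 2 i' by apply/val_inj.
  have -> : j = lshift 2 j' by apply/val_inj.
  rewrite block_mxEdl mxE /=; clear Hi Hj.
  by case: i' => -[|[|?]] ? //; case: j' => -[|[|?]] ?.
- have -> : i = rshift 2 i' by apply/val_inj.
  have -> : j = rshift 2 j' by apply/val_inj.
  rewrite block_mxEdr mxE /=; clear Hi Hj.
  by case: i' => -[|[|?]] ? //; case: j' => -[|[|?]] ?.
Qed.

Lemma det2 (T : comNzRingType) (M : 'M[T]_2) : \det M = M 0 0 * M 1 1 - M 0 1 * M 1 0.
Proof.
rewrite (expand_det_row _ 0) !big_ord_recl big_ord0 /cofactor !det_mx11 !mxE /=.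
rewrite (_ : M (lift 0 0) (lift ord0 0) = M 1 1); last by congr (M _ _); apply/val_inj.
rewrite (_ : M (lift 0 0) (lift (lift ord0 ord0) 0) = M 1 0); last by congr (M _ _); apply/val_inj.
rewrite (_ : M 0 (lift ord0 ord0) = M 0 1); last by congr (M _ _); apply/val_inj.
rewrite /bump /= expr0 expr1; ring.
Qed.

Lemma test (a b c : R) : ('X - a%:P) * ('X + a%:P) + b%:P * c%:P = 'X^2 + (b*c - a^+2)%:P :> {poly R}.
Proof. ring. Qed.

Lemma char_poly2 (B : 'M[R]_2) : char_poly B =
  'X^2 - (B 0 0 + B 1 1)%:P * 'X + (B 0 0 * B 1 1 - B 0 1 * B 1 0)%:P.
Proof. rewrite /char_poly det2 /char_poly_mx !mxE /= mulr1n mulr0n. ring. Qed.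

Lemma char_poly_Om2 (A : 'M[R]_2) : A 0 1 = A 1 0 ->
  char_poly (Omega2 R *m A) = 'X^2 + (A 0 0 * A 1 1 - A 0 1 * A 1 0)%:P.
Proof.
move=> HA; rewrite char_poly2.
have L : lift ord0 (ord0 : 'I_1) = (1 : 'I_2) by apply/val_inj.
repeat rewrite ?mxE ?big_ord_recl ?big_ord0 /=.
rewrite !L HA. ring.
Qed.

Lemma prodX_monic_size (nu : seq R) :
  (\prod_(x <- nu) ('X^2 + (x^+2)%:P) : {poly R}) \is monic /\
  size (\prod_(x <- nu) ('X^2 + (x^+2)%:P) : {poly R}) = (2 * size nu).+1.
Proof.
elim: nu => [|x nu [Hm Hs]]; first by rewrite big_nil monic1 size_poly1.
rewrite big_cons monicMl ?monicXnaddC // Hm; split => //.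
rewrite size_monicM ?monicXnaddC ?monic_neq0 // size_XnaddC // Hs /=.
by rewrite mulnS.
Qed.

Lemma char_poly_sim n (P Q A : 'M[R]_n) : P *m Q = 1%:M -> Q *m P = 1%:M ->
  char_poly (P *m A *m Q) = char_poly A.
Proof.
move=> PQ QP; rewrite /char_poly.
have -> : char_poly_mx (P *m A *m Q) =
   map_mx polyC P *m char_poly_mx A *m map_mx polyC Q.
  rewrite /char_poly_mx mulmxBr mulmxBl -!map_mxM mul_mx_scalar -scalemxAl.
  by rewrite -map_mxM PQ map_mx1 scalemx1.
rewrite !det_mulmx mulrC mulrA -det_mulmx -map_mxM QP map_mx1 det1 mul1r.
done.
Qed.

Lemma block4P (T : Type) (M : 'M[T]_4) (A B C D : 'M[T]_2) :
  (forall i j : 'I_2, M (lshift 2 i) (lshift 2 j) = A i j) ->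
  (forall i j : 'I_2, M (lshift 2 i) (rshift 2 j) = B i j) ->
  (forall i j : 'I_2, M (rshift 2 i) (lshift 2 j) = C i j) ->
  (forall i j : 'I_2, M (rshift 2 i) (rshift 2 j) = D i j) ->
  M = block_mx A B C D.
Proof.
move=> HA HB HC HD; apply/matrixP.
move: M HA HB HC HD; rewrite -[4%N]/(2+2)%N => M HA HB HC HD i j.
case: (splitP i) => i' Hi; case: (splitP j) => j' Hj.
- have -> : i = lshift 2 i' by apply/val_inj.
  have -> : j = lshift 2 j' by apply/val_inj.
  by rewrite block_mxEul HA.
- have -> : i = lshift 2 i' by apply/val_inj.
  have -> : j = rshift 2 j' by apply/val_inj.
  by rewrite block_mxEur HB.
- have -> : i = rshift 2 i' by apply/val_inj.
  have -> : j = lshift 2 j' by apply/val_inj.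
  by rewrite block_mxEdl HC.
- have -> : i = rshift 2 i' by apply/val_inj.
  have -> : j = rshift 2 j' by apply/val_inj.
  by rewrite block_mxEdr HD.
Qed.

Definition dg (e : R) (i : nat) : R := match i with 2 => e^+2 | 3 => e^-2 | _ => 1 end.
Definition Dm (e : R) : 'M[R]_4 := \matrix_(i < 4, j < 4) if i == j :> nat then dg e i else 0.
Definition Gm (s e : R) := Mt (-s) *m Dm e *m (Mt (-s))^T.
Definition gent (s e : R) (i j : nat) : R := match i, j with
  | 0, 0 => 1 + s^+2 * e^+2 | 0, 2 => - (s * e^+2) | 2, 0 => - (s * e^+2)
  | 1, 1 => 1 | 1, 3 => s | 3, 1 => s | 2, 2 => e^+2 | 3, 3 => e^-2 + s^+2
  | _, _ => 0 end.
Definition D2 (e : R) : 'M[R]_2 := \matrix_(i < 2, j < 2) if i == j :> nat then dg e i.+2 else 0.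

Ltac bf := apply/matrixP => -[[|[|[|[|?]]]] ?] -[[|[|[|[|?]]]] ?] //;
  repeat (rewrite ?mxE ?big_ord_recl ?big_ord0) => /=.

Lemma GmE s e : Gm s e = \matrix_(i < 4, j < 4) gent s e i j.
Proof. rewrite /Gm. bf. all: ring. Qed.

Lemma Mt0 : Mt 0 = 1%:M :> 'M[R]_4.
Proof. bf. all: ring. Qed.

Lemma MtM (a b : R) : Mt a *m Mt b = Mt (a + b).
Proof. bf. all: ring. Qed.

Lemma MtG t s e : Mt t *m Gm s e *m (Mt t)^T = Gm (s - t) e.
Proof.
by rewrite /Gm !mulmxA MtM -[_ *m (Mt t)^T]mulmxA -trmx_mul MtM opprB.
Qed.

Lemma OmG s e : Omega4 R *m Gm s e = (Mt s)^T *m (Omega4 R *m Dm e) *m (Mt (-s))^T.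
Proof.
rewrite /Gm !mulmxA; congr (_ *m _ *m _).
rewrite Omega4E. bf. all: ring.
Qed.

Lemma charD (e : R) : e != 0 ->
  char_poly (Omega4 R *m Dm e) = \prod_(x <- [:: 1; 1]) ('X^2 + (x^+2)%:P).
Proof.
move=> e0; rewrite /char_poly.
have -> : char_poly_mx (Omega4 R *m Dm e) =
  block_mx (char_poly_mx (Omega2 R *m 1%:M)) 0 0 (char_poly_mx (Omega2 R *m D2 e)).
  apply: block4P => -[[|[|?]] ?] -[[|[|?]] ?] //; rewrite ?Omega4E;
  repeat rewrite ?mxE ?big_ord_recl ?big_ord0 /=.
  all: try ring.
transitivity (\det (char_poly_mx (Omega2 R *m 1%:M)) * \det (char_poly_mx (Omega2 R *m D2 e))); first exact: (det_ublock (char_poly_mx (Omega2 R *m 1%:M)) 0 (char_poly_mx (Omega2 R *m D2 e))).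
have h1 := @char_poly_Om2 1%:M; rewrite /char_poly in h1; rewrite h1 ?mxE //.
have h2 := @char_poly_Om2 (D2 e); rewrite /char_poly in h2; rewrite h2 ?mxE //=.
rewrite !big_cons big_nil mulr1 divff ?expf_neq0 //.
by rewrite !mulr0 !subr0 !expr1n mulr1.
Qed.

Lemma charG (s e : R) : e != 0 ->
  char_poly (Omega4 R *m Gm s e) = \prod_(x <- [:: 1; 1]) ('X^2 + (x^+2)%:P).
Proof.
move=> e0; rewrite OmG char_poly_sim ?charD //.
- by rewrite -trmx_mul MtM addNr Mt0 trmx1.
- by rewrite -trmx_mul MtM addrN Mt0 trmx1.
Qed.


Lemma gfun1 : gfun (1 : R) = 0.
Proof. by rewrite /gfun subrr mul0r mul0r subr0 -[1 + 1]/(2%:R) divff // ln1 mulr0. Qed.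

Lemma ent2 (A : 'M[R]_2) (nu0 : R) : A 0 1 = A 1 0 -> 0 <= nu0 ->
  nu0 ^+ 2 = A 0 0 * A 1 1 - A 0 1 * A 1 0 ->
  gauss_entropy (Omega2 R) A = gfun nu0.
Proof.
rewrite /gauss_entropy => HA Hn Hd; apply: xget_unique.
  exists [:: nu0]; split; last by rewrite big_seq1.
  by split; [rewrite /= Hn | rewrite big_seq1 char_poly_Om2 // Hd].
move=> y /= [nu [[Hall Hc] ->]].
have [_ Hs] := prodX_monic_size nu.
rewrite -Hc size_char_poly in Hs.
case: Hs => /esym Hs.
have : size nu = 1%N by apply/eqP; rewrite -(@eqn_pmul2l 2) // Hs.
case: nu Hall Hc {Hs} => [|x [|? ?]] //= Hall Hc _.
rewrite big_seq1; rewrite big_seq1 char_poly_Om2 // -Hd in Hc.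
have := congr1 (fun p : {poly R} => p`_0) Hc.
rewrite !coefD !coefXn !coefC /= !add0r => /eqP.
move: Hall; rewrite andbT => Hx.
by rewrite eqrXn2 // => /eqP ->.
Qed.

Lemma ent4 (G : 'M[R]_4) :
  char_poly (Omega4 R *m G) = \prod_(x <- [:: 1; 1]) ('X^2 + (x^+2)%:P) ->
  gauss_entropy (Omega4 R) G = 0.
Proof.
rewrite /gauss_entropy => HG; apply: xget_unique.
  exists [:: 1; 1]; split; last by rewrite !big_cons big_nil gfun1 !addr0.
  by split; rewrite //= ler01.
move=> y /= [nu [[Hall Hc] ->]].
have [_ Hs] := prodX_monic_size nu.
rewrite -Hc size_char_poly in Hs.
case: Hs => /esym Hs.
have : size nu = 2%N by apply/eqP; rewrite -(@eqn_pmul2l 2) // Hs.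
case: nu Hall Hc {Hs} => [|a [|b [|? ?]]] //= Hall Hc _.
rewrite HG !big_cons !big_nil in Hc.
have h0 := congr1 (fun p : {poly R} => p.[0]) Hc.
have h1 := congr1 (fun p : {poly R} => p.[1]) Hc.
rewrite /= !hornerE /= in h0 h1.
move: Hall => /and3P [Ha Hb _].
have ea : a ^+ 2 * b ^+ 2 = 1 by nra.
have eb : a ^+ 2 + b ^+ 2 = 2 by nra.
have : (a ^+ 2 - 1) ^+ 2 = 0 by nra.
move/eqP; rewrite expf_eq0 /= subr_eq0 => /eqP a1.
have b1 : b ^+ 2 = 1 by lra.
have -> : a = 1 by apply/eqP; rewrite -(eqrXn2 (n:=2)) // a1 expr1n.
have -> : b = 1 by apply/eqP; rewrite -(eqrXn2 (n:=2)) // b1 expr1n.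
by rewrite !big_cons big_nil gfun1 !addr0.
Qed.

Lemma miG (s e nu : R) : e != 0 -> 0 <= nu -> nu ^+ 2 = 1 + s ^+ 2 * e ^+ 2 ->
  mutual_info (Gm s e) = gfun nu + gfun nu.
Proof.
move=> e0 Hn Hnu; rewrite /mutual_info ent4 ?charG // subr0.
congr (_ + _); apply: ent2 => //; rewrite /covA /covB GmE !mxE /=.
- by [].
- by rewrite Hnu; ring.
- by [].
- by rewrite Hnu; field; rewrite ?expf_neq0.
Qed.

Lemma Gsym (s e : R) : (Gm s e)^T = Gm s e.
Proof.
rewrite GmE; apply/matrixP => -[[|[|[|[|?]]]] ?] -[[|[|[|[|?]]]] ?] //; rewrite !mxE //.
Qed.

Lemma ReM (x y : R[i]) : complex.Re (x * y) = complex.Re x * complex.Re y - complex.Im x * complex.Im y.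
Proof. by case: x => a b; case: y => c d. Qed.
Lemma ImM (x y : R[i]) : complex.Im (x * y) = complex.Re x * complex.Im y + complex.Im x * complex.Re y.
Proof. by case: x => a b; case: y => c d. Qed.
Lemma ReD (x y : R[i]) : complex.Re (x + y) = complex.Re x + complex.Re y.
Proof. by case: x => a b; case: y => c d. Qed.
Lemma ImD (x y : R[i]) : complex.Im (x + y) = complex.Im x + complex.Im y.
Proof. by case: x => a b; case: y => c d. Qed.
Lemma Re_r (x : R) : complex.Re (x%:C)%C = x. Proof. by []. Qed.
Lemma Im_r (x : R) : complex.Im (x%:C)%C = 0. Proof. by []. Qed.
Lemma Re_i : complex.Re ('i%C : R[i]) = 0. Proof. by []. Qed.
Lemma Im_i : complex.Im ('i%C : R[i]) = 1. Proof. by []. Qed.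
Lemma Im_C (a b : R) : complex.Im (a +i* b)%C = b. Proof. by []. Qed.
Lemma Re_C (a b : R) : complex.Re (a +i* b)%C = a. Proof. by []. Qed.
Lemma Re_c (x : R[i]) : complex.Re (x^*)%C = complex.Re x. Proof. by case: x. Qed.
Lemma Im_c (x : R[i]) : complex.Im (x^*)%C = - complex.Im x. Proof. by case: x. Qed.

Lemma Gpsd (s e : R) : e != 0 ->
  psd_cplx (cplx_mx (Gm s e) + (Complex 0 1) *: cplx_mx (Omega4 R)).
Proof.
move=> e0 v; rewrite GmE Omega4E.
repeat rewrite ?mxE ?big_ord_recl ?big_ord0 /=.
case: (v ord0 0) => a0 b0; case: (v (lift ord0 ord0) 0) => a1 b1.
case: (v (lift ord0 (lift ord0 ord0)) 0) => a2 b2.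
case: (v (lift ord0 (lift ord0 (lift ord0 ord0))) 0) => a3 b3.
rewrite lecE; apply/andP; split.
  rewrite !(ImD, ReD, ImM, ReM, Im_r, Re_r, Im_i, Re_i, Re_c, Im_c, Im_C, Re_C).
  repeat (let z := fresh "z" in set z := Algebra.hasZero.zero _; have -> : z = 0 by []; clear z).
  apply/eqP; ring.
rewrite !(ImD, ReD, ImM, ReM, Im_r, Re_r, Im_i, Re_i, Re_c, Im_c, Im_C, Re_C).
repeat (let z := fresh "z" in set z := Algebra.hasZero.zero _; have -> : z = 0 by []; clear z).
rewrite [X in _ <= X](_ : _ = (a0 - b1 - s*b3)^+2 + (b0 + a1 + s*a3)^+2
   + (e*(a2 - s*a0) - b3/e)^+2 + (e*(b2 - s*b0) + a3/e)^+2).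
  by rewrite !addr_ge0 ?sqr_ge0.
by field.
Qed.
End S.

Section N.
Variable R : realType.

Lemma ln2_le : ln (2 : R) <= 9 / 10.
Proof.
have h : (2 : R) <= expR (9 / 10).
  have -> : (9 / 10 : R) = 9 / 20 + 9 / 20 by field.
  rewrite expRD.
  have h1 := expR_ge1Dx (9 / 20 : R).
  have h0 : (0 : R) <= 1 + 9 / 20 by lra.
  nra.
rewrite -[X in _ <= X]expRK ler_ln ?posrE ?expR_gt0 //.
Qed.

Lemma lnexp2 : ln (expR 1 / 2 : R) = 1 - ln 2.
Proof.
rewrite lnM ?posrE ?expR_gt0 ?invr_gt0 // expRK lnV ?posrE //.
Qed.

Definition nu0 : R := 1 + 2 / 255.

Lemma final_bound : 4 * gfun nu0 <= 2 * ln (expR 1 / 2 : R).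
Proof.
rewrite lnexp2 /gfun /nu0.
have -> : (1 + 2 / 255 + 1) / 2 = 1 + 1 / 255 :> R by field.
have -> : (1 + 2 / 255 - 1) / 2 = (255 : R)^-1 by field.
rewrite lnV; last by rewrite posrE ltr0n.
have h1 : ln (1 + 1 / 255 : R) <= 1 / 255 by apply: le_ln1Dx; lra.
have h2 : ln (255 : R) <= ln 2 *+ 8.
  rewrite -lnXn; last by rewrite ltr0n.
  rewrite ler_ln; [|by rewrite posrE ltr0n|by rewrite posrE exprn_gt0 // ltr0n].
  by rewrite -natrX ler_nat.
have h3 := ln2_le.
rewrite -[ln 2 *+ 8]mulr_natr in h2; move: h1 h2 h3.
move: (ln (1 + 1 / 255 : R)) (ln (255 : R)) (ln (2 : R)) => x y z.
lra.
Qed.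
End N.

Theorem mainTheorem9 (R : realType) (t : R) : 0 <= t ->
  (ereal_inf [set ((mutual_info G + mutual_info (Mt t *m G *m (Mt t)^T))%:E)%E
              | G in [set G : 'M[R]_4 | gaussian_cov G]]
   <= (2 * ln (expR 1 / 2))%:E)%E.
Proof.
move=> t0.
have key : forall e nu : R, e != 0 -> 0 <= nu -> nu ^+ 2 = 1 + (t / 2) ^+ 2 * e ^+ 2 ->
  mutual_info (Gm (t / 2) e) + mutual_info (Mt t *m Gm (t / 2) e *m (Mt t)^T)
  = 4 * gfun nu.
  move=> e nu e0 n0 Hnu; rewrite MtG (miG e0 n0 Hnu) (@miG _ _ _ nu e0 n0).
    ring.
  by rewrite Hnu; field.
have lb : forall e : R, e != 0 ->
  (ereal_inf [set ((mutual_info G + mutual_info (Mt t *m G *m (Mt t)^T))%:E)%E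
              | G in [set G : 'M[R]_4 | gaussian_cov G]]
   <= (mutual_info (Gm (t / 2) e) + mutual_info (Mt t *m Gm (t / 2) e *m (Mt t)^T))%:E)%E.
  move=> e e0; apply: ereal_inf_lbound; exists (Gm (t / 2) e) => //.
  by split; [exact: Gsym | exact: Gpsd].
case: (eqVneq t 0) => [tz|tn0].
  apply: le_trans (lb 1 (oner_neq0 _)) _.
  rewrite (key 1 1) ?oner_neq0 ?ler01 //; last by rewrite tz; ring.
  rewrite lee_fin gfun1 mulr0 lnexp2.
  have := @ln2_le R; lra.
have e0 : (32 / 255) / (t / 2) != 0 :> R.
  have tp : 0 < t by rewrite lt0r tn0 t0.
  rewrite gt_eqF // divr_gt0 // ?divr_gt0 // ltr0n //.
apply: le_trans (lb _ e0) _.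
rewrite (key _ (nu0 R)) //.
- by rewrite lee_fin final_bound.
- rewrite /nu0; lra.
- rewrite /nu0; field; exact: tn0.
Qed.
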